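(* The symmetric group of an infinite set $X$, with the topology of pointwise convergence (on $X$ discrete), fails topological bounded normal generation. The projective unitary group of an infinite-dimensional Hilbert space, with the (quotient of the) strong operator topology, fails topological bounded normal generation.
   Context: For $g$ in a group $G$, $g^{\pm G}=\{hgh^{-1}:h\in G\}\cup\{hg^{-1}h^{-1}:h\in G\}$; $A^{\cdot n}$ is the set of products of $n$ elements of $A$. A topological group $G$ has topological bounded normal generation if for every nontrivial $g\in G$ there is $n(g)\in\mathbb N$ with $\overline{(g^{\pm G})^{\cdot n(g)}}=G$. The projective unitary group of a Hilbert space $\mathcal H$ is $U(\mathcal H)/\mathbb S^1$. *)

(* Defs.v *)
From mathcomp Require Import all_boot all_algebra.
From mathcomp Require Import reals complex.
From Stdlib Require Import ClassicalEpsilon.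
Set Implicit Arguments. Unset Strict Implicit. Unset Printing Implicit Defensive.
Import GRing.Theory Num.Theory.
Local Open Scope ring_scope.

Section TBNG.
Variables (G : Type) (mul : G -> G -> G) (inv : G -> G) (one : G)
          (opn : (G -> Prop) -> Prop).

Definition conj_pm (g : G) : G -> Prop :=
  fun x => exists h, x = mul (mul h g) (inv h) \/ x = mul (mul h (inv g)) (inv h).

Fixpoint set_pow (A : G -> Prop) (n : nat) : G -> Prop :=
  match n with
  | O => fun x => x = one
  | S m => fun x => exists a b, A a /\ set_pow A m b /\ x = mul a b
  end.

Definition closure_of (A : G -> Prop) : G -> Prop :=
  fun x => forall U, opn U -> U x -> exists y, U y /\ A y.

Definition top_bounded_normal_generation : Prop :=
  forall g, g <> one -> exists n : nat,
    forall x, closure_of (set_pow (conj_pm g) n) x.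
End TBNG.

Record perm_of (X : Type) := PermOf {
  pfun : X -> X; pinv : X -> X;
  pfunK : forall x, pinv (pfun x) = x;
  pinvK : forall x, pfun (pinv x) = x }.

Section Sym.
Variable X : Type.
Definition sym_mul (f g : perm_of X) : perm_of X.
Proof.
refine (@PermOf X (fun x => pfun f (pfun g x)) (fun x => pinv g (pinv f x)) _ _).
- by move=> x; rewrite pfunK pfunK.
- by move=> x; rewrite pinvK pinvK.
Defined.
Definition sym_inv (f : perm_of X) : perm_of X :=
  @PermOf X (pinv f) (pfun f) (@pinvK X f) (@pfunK X f).
Definition sym_one : perm_of X :=
  @PermOf X (fun x => x) (fun x => x) (fun _ => erefl) (fun _ => erefl).
(* U is open iff around each of its points it contains a basic neighbourhood
   {h | h agrees with g on the finite set xs} (X discrete, pointwise conv.) *)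
Definition sym_open (U : perm_of X -> Prop) : Prop :=
  forall g, U g -> exists xs : list X,
    forall h, (forall x, List.In x xs -> pfun h x = pfun g x) -> U h.
End Sym.

Definition infinite_type (X : Type) : Prop :=
  forall xs : list X, exists x, ~ List.In x xs.

Record inner_product (R : realType) (H : lmodType R[i]) := InnerProduct {
  inner : H -> H -> R[i];
  inner_linl : forall (a : R[i]) x y z, inner (a *: x + y) z = a * inner x z + inner y z;
  inner_conj : forall x y, inner y x = (inner x y)^*;
  inner_ge0 : forall x, 0 <= inner x x;
  inner_eq0 : forall x, inner x x = 0 -> x = 0 }.

Section Hilbert.
Variables (R : realType) (H : lmodType R[i]) (ip : inner_product H).

Definition hnorm (x : H) : R[i] := sqrtC (inner ip x x).

Definition hilbert_complete : Prop :=
  forall u : nat -> H,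
    (forall eps : R[i], 0 < eps -> exists N, forall m n, (N <= m)%N -> (N <= n)%N ->
        hnorm (u m - u n) < eps) ->
    exists l, forall eps : R[i], 0 < eps -> exists N, forall n, (N <= n)%N ->
        hnorm (u n - l) < eps.

Definition infinite_dimensional : Prop :=
  forall n : nat, exists e : 'I_n -> H,
    forall i j, inner ip (e i) (e j) = (i == j)%:R.

Record unitary := Unitary {
  ufun : H -> H; uinv : H -> H;
  ufun_lin : forall (a : R[i]) x y, ufun (a *: x + y) = a *: ufun x + ufun y;
  ufunK : forall x, uinv (ufun x) = x;
  uinvK : forall x, ufun (uinv x) = x;
  ufun_inner : forall x y, inner ip (ufun x) (ufun y) = inner ip x y }.

Lemma uinv_lin (u : unitary) (a : R[i]) x y :
  uinv u (a *: x + y) = a *: uinv u x + uinv u y.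
Proof.
rewrite -[in LHS](uinvK u x) -[in LHS](uinvK u y) -ufun_lin.
by rewrite ufunK.
Qed.

Lemma uinv_inner (u : unitary) x y :
  inner ip (uinv u x) (uinv u y) = inner ip x y.
Proof. by rewrite -(ufun_inner u) !uinvK. Qed.

Definition u_mul (u v : unitary) : unitary.
Proof.
refine (@Unitary (fun x => ufun u (ufun v x)) (fun x => uinv v (uinv u x)) _ _ _ _).
- by move=> a x y; rewrite !ufun_lin.
- by move=> x; rewrite !ufunK.
- by move=> x; rewrite !uinvK.
- by move=> x y; rewrite !ufun_inner.
Defined.

Definition u_inv (u : unitary) : unitary :=
  @Unitary (uinv u) (ufun u) (@uinv_lin u) (uinvK u) (ufunK u) (@uinv_inner u).

Definition u_one : unitary.
Proof.
by refine (@Unitary (fun x => x) (fun x => x) _ _ _ _).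
Defined.

Definition sot_open (V : unitary -> Prop) : Prop :=
  forall u, V u -> exists (xs : list H) (eps : R[i]), 0 < eps /\
    forall w, (forall x, List.In x xs -> hnorm (ufun w x - ufun u x) < eps) -> V w.

(* projective unitary group U(H)/S^1 : classes u S^1 *)
Definition uclass (u : unitary) : unitary -> Prop :=
  fun w => exists lam : R[i], `|lam| = 1 /\ forall x, ufun w x = lam *: ufun u x.

Definition PU := {A : unitary -> Prop | exists u, A = uclass u}.

Definition pu_of (u : unitary) : PU := exist _ (uclass u) (ex_intro _ u erefl).

Definition pu_rep (A : PU) : unitary :=
  proj1_sig (constructive_indefinite_description _ (proj2_sig A)).

Definition pu_mul (A B : PU) : PU := pu_of (u_mul (pu_rep A) (pu_rep B)).
Definition pu_inv (A : PU) : PU := pu_of (u_inv (pu_rep A)).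
Definition pu_one : PU := pu_of u_one.

(* quotient topology of the strong operator topology *)
Definition pu_open (W : PU -> Prop) : Prop :=
  sot_open (fun u => W (pu_of u)).
End Hilbert.

(* Main.v *)
Require Import Defs.
From mathcomp Require Import all_boot all_algebra.
From mathcomp Require Import all_order reals complex.
From Stdlib Require Import ClassicalEpsilon.
From mathcomp Require Import ring lra.
Set Implicit Arguments. Unset Strict Implicit. Unset Printing Implicit Defensive.
Import Order.TTheory GRing.Theory Num.Theory.
Local Open Scope ring_scope.

Lemma memIn (T : eqType) (x : T) (s : seq T) : x \in s -> List.In x s.
Proof.
elim: s => //= a s IH; rewrite inE => /orP [/eqP ->|h]; [by left | by right; apply: IH].
Qed.

Section HilbertFacts.
Variables (R : realType) (H : lmodType R[i]) (ip : inner_product H).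
Local Notation inn := (inner ip).
Local Notation hn := (hnorm ip).

Lemma inn0l z : inn 0 z = 0.
Proof.
have h := inner_linl ip 1 0 0 z; rewrite scale1r addr0 mul1r in h.
by apply: (@addrI _ (inn 0 z)); rewrite addr0 -h.
Qed.

Lemma innDl x y z : inn (x + y) z = inn x z + inn y z.
Proof. by rewrite -[x]scale1r inner_linl mul1r scale1r. Qed.

Lemma innZl a x z : inn (a *: x) z = a * inn x z.
Proof. by rewrite -[a *: x]addr0 inner_linl inn0l addr0. Qed.

Lemma innNl x z : inn (- x) z = - inn x z.
Proof. by rewrite -scaleN1r innZl mulN1r. Qed.

Lemma innBl x y z : inn (x - y) z = inn x z - inn y z.
Proof. by rewrite innDl innNl. Qed.

Lemma innDr x y z : inn z (x + y) = inn z x + inn z y.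
Proof. by rewrite (inner_conj ip (x + y)) (inner_conj ip x) (inner_conj ip y) innDl rmorphD. Qed.

Lemma innZr a x z : inn z (a *: x) = a^* * inn z x.
Proof. by rewrite (inner_conj ip (a *: x)) (inner_conj ip x) innZl rmorphM. Qed.

Lemma inn0r z : inn z 0 = 0.
Proof. by rewrite inner_conj inn0l rmorph0. Qed.

Lemma innNr x z : inn z (- x) = - inn z x.
Proof. by rewrite (inner_conj ip (- x)) (inner_conj ip x) innNl rmorphN. Qed.

Lemma innBr x y z : inn z (x - y) = inn z x - inn z y.
Proof. by rewrite innDr innNr. Qed.

Lemma innsuml I (r : seq I) (P : pred I) (F : I -> H) z :
  inn (\sum_(i <- r | P i) F i) z = \sum_(i <- r | P i) inn (F i) z.
Proof. exact: (big_morph (fun x => inn x z) (fun x y => innDl x y z) (inn0l z)). Qed.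

Lemma inn_real x : (inn x x)^* = inn x x.
Proof. exact: geC0_conj (inner_ge0 ip x). Qed.

Lemma hn_ge0 x : 0 <= hn x.
Proof. by rewrite sqrtC_ge0 inner_ge0. Qed.

Lemma hnK x : hn x ^+ 2 = inn x x.
Proof. by rewrite /hnorm sqrtCK. Qed.

Lemma hn_gt0 x : x != 0 -> 0 < hn x.
Proof.
move=> nx; rewrite sqrtC_gt0 lt_def inner_ge0 andbT.
by apply/eqP => /inner_eq0 /eqP; rewrite (negbTE nx).
Qed.

Lemma hn0 : hn 0 = 0.
Proof. by rewrite /hnorm inn0l sqrtC0. Qed.

Lemma hnZ a x : hn (a *: x) = `|a| * hn x.
Proof.
rewrite /hnorm innZl innZr mulrA -normCK sqrtCM ?sqrCK //.
- by rewrite qualifE /= exprn_ge0.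
- by rewrite qualifE /= inner_ge0.
Qed.

Lemma hnN x : hn (- x) = hn x.
Proof. by rewrite -scaleN1r hnZ normrN normr1 mul1r. Qed.

Lemma CS x y : `|inn x y| <= hn x * hn y.
Proof.
have [->|ny] := eqVneq y 0; first by rewrite inn0r normr0 hn0 mulr0.
have Ny : 0 < inn y y by rewrite -hnK exprn_gt0 // hn_gt0.
set d := inn x y.
have := inner_ge0 ip (x - (d / inn y y) *: y).
rewrite innBl !innBr !innZl !innZr.
have -> : inn y x = d^* by rewrite /d inner_conj.
rewrite rmorphM /= rmorphV ?unitfE ?gt_eqF //= inn_real.
set Nx := inn x x; set Ny' := inn y y. rewrite -/d.
have -> : Nx - d^* / Ny' * d - (d / Ny' * d^* - d / Ny' * (d^* / Ny' * Ny'))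
   = Nx - `|d| ^+ 2 / Ny'.
  rewrite normCK; field; by rewrite gt_eqF.
rewrite subr_ge0 ler_pdivrMr // => h.
have hh : `|d| ^+ 2 <= (hn x * hn y) ^+ 2 by rewrite exprMn !hnK; exact: h.
by move: hh; rewrite ler_pXn2r //= ?qualifE /= ?normr_ge0 ?mulr_ge0 ?hn_ge0.
Qed.

Lemma hnD x y : hn (x + y) <= hn x + hn y.
Proof.
rewrite /hnorm -[X in _ <= X]sqrCK ?addr_ge0 ?hn_ge0 //.
rewrite ler_sqrtC ?qualifE /= ?inner_ge0 ?exprn_ge0 ?addr_ge0 ?hn_ge0 //.
rewrite innDl !innDr sqrrD -!/(hnorm _ _) !hnK.
have -> : inn y x = (inn x y)^* by rewrite inner_conj.
rewrite -addrA [X in _ <= X]addrAC -!addrA lerD2l addrA [X in _ <= X]addrC lerD2r.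
apply: (le_trans (y := 2 * `|inn x y|)).
  rewrite mulr2n mulrDl mul1r.
  have hr : inn x y + (inn x y)^* \is Num.real.
    by apply/CrealP; rewrite rmorphD /= conjCK addrC.
  apply: le_trans (real_ler_norm hr) _.
  by apply: le_trans (ler_normD _ _) _; rewrite norm_conjC.
by rewrite mulr2n mulrDl mul1r -mulr2n lerMn2r /= CS.
Qed.


Lemma ufun0 (u : unitary ip) : ufun u 0 = 0.
Proof.
have h := ufun_lin u 1 0 0; rewrite scale1r addr0 scale1r in h.
by apply: (@addrI _ (ufun u 0)); rewrite addr0 -h.
Qed.

Lemma ufunD (u : unitary ip) x y : ufun u (x + y) = ufun u x + ufun u y.
Proof. by have := ufun_lin u 1 x y; rewrite !scale1r. Qed.

Lemma ufunZ (u : unitary ip) a x : ufun u (a *: x) = a *: ufun u x.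
Proof. by rewrite -[a *: x]addr0 ufun_lin ufun0 addr0. Qed.

Lemma ufunN (u : unitary ip) x : ufun u (- x) = - ufun u x.
Proof. by rewrite -scaleN1r ufunZ scaleN1r. Qed.

Lemma ufunB (u : unitary ip) x y : ufun u (x - y) = ufun u x - ufun u y.
Proof. by rewrite ufunD ufunN. Qed.

Lemma ufun_sum (u : unitary ip) I (r : seq I) (P : pred I) (F : I -> H) :
  ufun u (\sum_(i <- r | P i) F i) = \sum_(i <- r | P i) ufun u (F i).
Proof. exact: (big_morph (ufun u) (ufunD u) (ufun0 u)). Qed.

Section Refl.
Variables (e : H) (he : inn e e = 1).
Definition reflf (x : H) : H := x - (2 * inn x e) *: e.

Lemma reflf_lin a x y : reflf (a *: x + y) = a *: reflf x + reflf y.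
Proof.
rewrite /reflf innDl innZl mulrDr scalerDl scalerBr scalerA [2 * (a * _)]mulrCA.
by rewrite opprD addrACA.
Qed.

Lemma reflfK x : reflf (reflf x) = x.
Proof.
rewrite /reflf innBl innZl he mulr1.
have -> : 2 * (inn x e - 2 * inn x e) = - (2 * inn x e) by ring.
by rewrite scaleNr opprK subrK.
Qed.

Lemma reflf_inner x y : inn (reflf x) (reflf y) = inn x y.
Proof.
rewrite /reflf innBl !innBr !innZl !innZr he.
have -> : inn e y = (inn y e)^* by rewrite inner_conj.
rewrite rmorphM /=.
have -> : 2^* = 2 :> R[i] by rewrite geC0_conj // ler0n.
ring.
Qed.

Definition refl : unitary ip :=
  @Unitary R H ip reflf reflf reflf_lin reflfK reflfK reflf_inner.

Lemma refl_orth x : inn x e = 0 -> ufun refl x = x.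
Proof. by move=> h; rewrite /= /reflf h mulr0 scale0r subr0. Qed.

Lemma refl_e : ufun refl e = - e.
Proof. by rewrite /= /reflf he mulr1 -[X in X - _]scale1r -scalerBl; rewrite -scaleN1r; congr (_ *: _); ring. Qed.
End Refl.

Definition Qk (k : nat) (w : unitary ip) := exists ys : seq H, (size ys <= k)%N /\
  exists mu : R[i], (`|mu| = 1) /\
    (forall x, (forall y, y \in ys -> inn x y = 0) -> ufun w x = mu *: x).

Lemma Qk_scale k (w w' : unitary ip) (ka : R[i]) : `|ka| = 1 ->
  (forall x, ufun w' x = ka *: ufun w x) -> Qk k w -> Qk k w'.
Proof.
move=> nk hw [ys [sz [mu [nm h]]]]; exists ys; split => //.
exists (ka * mu); split; first by rewrite normrM nk nm mulr1.
by move=> x hx; rewrite hw h // scalerA.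
Qed.

Lemma Qk_mul a b (v w : unitary ip) : Qk a v -> Qk b w -> Qk (a + b) (u_mul v w).
Proof.
move=> [ys1 [sz1 [mu1 [n1 h1]]]] [ys2 [sz2 [mu2 [n2 h2]]]].
exists (ys1 ++ ys2); split; first by rewrite size_cat leq_add.
exists (mu1 * mu2); split; first by rewrite normrM n1 n2 mulr1.
move=> x hx /=; rewrite h2; last by move=> y hy; apply: hx; rewrite mem_cat hy orbT.
rewrite ufunZ h1; last by move=> y hy; apply: hx; rewrite mem_cat hy.
by rewrite scalerA mulrC.
Qed.

Lemma Qk_inv k (v : unitary ip) : Qk k v -> Qk k (u_inv v).
Proof.
move=> [ys [sz [mu [nm h]]]]; exists ys; split => //.
have mu0 : mu != 0 by apply/eqP => m0; move: nm; rewrite m0 normr0 => /eqP; rewrite eq_sym oner_eq0.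
exists mu^-1; split; first by rewrite normfV nm invr1.
move=> x hx /=.
have e1 : mu *: uinv v x = x.
  have := ufunK v x; rewrite h // => e2.
  by rewrite -[in RHS]e2 -[uinv v (mu *: x)]/(ufun (u_inv v) (mu *: x)) ufunZ.
by rewrite -[in RHS]e1 scalerA mulVf // scale1r.
Qed.

Lemma Qk_conj k (h v : unitary ip) : Qk k v -> Qk k (u_mul (u_mul h v) (u_inv h)).
Proof.
move=> [ys [sz [mu [nm hv]]]]; exists (map (ufun h) ys); split; first by rewrite size_map.
exists mu; split => // x hx /=.
rewrite hv ?ufunZ ?uinvK // => y hy.
by rewrite -(ufun_inner h) uinvK; apply: hx; rewrite map_f.
Qed.


Lemma pu_rep_in (A : PU ip) : proj1_sig A (pu_rep A).
Proof.
rewrite /pu_rep; case: (constructive_indefinite_description _ _) => v /= ->.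
by exists 1; split; [rewrite normr1 | move=> x; rewrite scale1r].
Qed.

Lemma pu_rep_of (u : unitary ip) : exists ka : R[i], `|ka| = 1 /\
  forall x, ufun (pu_rep (pu_of u)) x = ka *: ufun u x.
Proof. exact: (pu_rep_in (pu_of u)). Qed.

Definition QP k (A : PU ip) := Qk k (pu_rep A).

Lemma QP_of k u : Qk k u -> QP k (pu_of u).
Proof. by move=> q; have [ka [nk hk]] := pu_rep_of u; apply: Qk_scale nk hk q. Qed.

Lemma QP_mul a b A B : QP a A -> QP b B -> QP (a + b) (pu_mul A B).
Proof. by move=> qa qb; apply: QP_of; apply: Qk_mul. Qed.

Lemma QP_inv k A : QP k A -> QP k (pu_inv A).
Proof. by move=> q; apply: QP_of; apply: Qk_inv. Qed.

Lemma QP_conj k h A : QP k A -> QP k (pu_mul (pu_mul h A) (pu_inv h)).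
Proof.
move=> q; apply: QP_of.
have [k1 [n1 h1]] := pu_rep_of (u_mul (pu_rep h) (pu_rep A)).
have [k2 [n2 h2]] := pu_rep_of (u_inv (pu_rep h)).
apply: (@Qk_scale _ (u_mul (u_mul (pu_rep h) (pu_rep A)) (u_inv (pu_rep h))) _ (k1 * k2)).
- by rewrite normrM n1 n2 mulr1.
- by move=> x /=; rewrite h1 h2 /= !ufunZ scalerA.
- exact: Qk_conj.
Qed.

Lemma QP_pow g n A : QP 1 g -> set_pow (@pu_mul R H ip) (@pu_one R H ip) (conj_pm (@pu_mul R H ip) (@pu_inv R H ip) g) n A -> QP n A.
Proof.
move=> qg; elim: n A => [|n IH] A /=.
  move=> ->; apply: QP_of; exists [::]; split => //; exists 1; split; first by rewrite normr1.
  by move=> x _; rewrite scale1r.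
move=> [a [b [[h ha] [hb ->]]]].
have qa : QP 1 a by case: ha => ->; [apply: QP_conj | apply: QP_conj; apply: QP_inv].
by have := QP_mul qa (IH b hb); rewrite add1n.
Qed.

Lemma hn_sum I (r : seq I) (P : pred I) (F : I -> H) :
  hn (\sum_(i <- r | P i) F i) <= \sum_(i <- r | P i) hn (F i).
Proof.
elim/big_rec2: _ => [|i s1 s2 _ h]; first by rewrite hn0.
by apply: le_trans (hnD _ _) _; rewrite lerD2l.
Qed.

Lemma exists_orth m (E : 'I_m -> H) (ys : seq H) : (size ys < m)%N ->
  exists c : 'I_m -> R[i], (exists j, c j != 0) /\
    forall y, y \in ys -> inn (\sum_j c j *: E j) y = 0.
Proof.
move=> sz.
pose A : 'M[R[i]]_(m, size ys) := \matrix_(i, k) inn (E i) (nth 0 ys k).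
pose K := kermx A.
have rK : (0 < \rank K)%N.
  rewrite mxrank_ker subn_gt0; exact: leq_ltn_trans (rank_leq_col A) sz.
have [i ri] : exists i, row i K != 0.
  apply/existsP; apply: contraTT rK; rewrite negb_exists => /forallP hK.
  rewrite lt0n negbK mxrank_eq0; apply/eqP/row_matrixP => i.
  by rewrite row0; apply/eqP; move: (hK i); rewrite negbK.
have [j cj] : exists j, K i j != 0.
  apply/existsP; apply: contraTT ri; rewrite negb_exists => /forallP hK.
  by rewrite negbK; apply/eqP/rowP => j; move: (hK j); rewrite negbK !mxE => /eqP.
exists (fun j => K i j); split; first by exists j.
move=> y yin.
have ky : (index y ys < size ys)%N by rewrite index_mem.
have := congr1 (fun M : 'M_(m, size ys) => M i (Ordinal ky)) (mulmx_ker A).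
rewrite !mxE => h0.
rewrite innsuml -[RHS]h0; apply: eq_bigr => l _.
by rewrite innZl; congr (_ * _); rewrite mxE /= nth_index.
Qed.

Lemma key m (E : 'I_m -> H) (orth : forall i j, inn (E i) (E j) = (i == j)%:R)
  (ys : seq H) (sz : (size ys < m)%N) (mu : R[i]) (w : unitary ip)
  (hw : forall x, (forall y, y \in ys -> inn x y = 0) -> ufun w x = mu *: x)
  (ka : R[i]) :
  `|mu - ka| <= \sum_j hn (ufun w (E j) - ka *: E j).
Proof.
have [c [[j0 cj0] hc]] := exists_orth E sz.
set x := \sum_j c j *: E j.
have hxE j : inn x (E j) = c j.
  rewrite innsuml (bigD1 j) //= innZl orth eqxx mulr1 big1 ?addr0 // => i /negbTE ij.
  by rewrite innZl orth ij mulr0.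
have x0 : x != 0.
  by apply: contraNneq cj0 => x0; rewrite -hxE x0 inn0l.
have hE j : hn (E j) = 1 by rewrite /hnorm orth eqxx sqrtC1.
have eq : (mu - ka) *: x = \sum_j c j *: (ufun w (E j) - ka *: E j).
  rewrite scalerBl -hw // /x ufun_sum scaler_sumr -sumrB; apply: eq_bigr => j _.
  by rewrite ufunZ scalerBr !scalerA mulrC.
have := hn_gt0 x0; move/ler_pM2l => <-.
rewrite mulrC -hnZ eq mulr_sumr.
apply: le_trans (hn_sum _ _ _) _; apply: ler_sum => j _.
rewrite hnZ ler_wpM2r ?hn_ge0 //.
by rewrite -hxE -[hn x]mulr1 -(hE j) CS.
Qed.

Section Zdef.
Variables (m : nat) (E : 'I_m -> H) (he : forall i, inn (E i) (E i) = 1)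
  (horth : forall i j, i != j -> inn (E i) (E j) = 0).

Definition zf (s : seq 'I_m) : unitary ip :=
  foldr (fun i u => u_mul (refl (he i)) u) (u_one ip) s.

Lemma zf_orth s x : (forall i, i \in s -> inn x (E i) = 0) -> ufun (zf s) x = x.
Proof.
elim: s => [|i s IH] hx //=.
rewrite IH; last by move=> j js; apply: hx; rewrite inE js orbT.
exact: (refl_orth (he i) (hx i (mem_head _ _))).
Qed.

Lemma zf_E s j : uniq s -> j \in s -> ufun (zf s) (E j) = - E j.
Proof.
elim: s => [|i s IH] //= /andP [nis us]; rewrite inE => /orP [/eqP ->|js].
  rewrite zf_orth; first exact: (refl_e (he i)).
  by move=> k ks; apply: horth; apply: contraNneq nis => ->.
rewrite IH //; apply: (refl_orth (he i)).
by rewrite innNl horth ?oppr0 //; apply: contraNneq nis => <-.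
Qed.
End Zdef.

Definition near m (E F : 'I_m -> H) (w : unitary ip) :=
  exists la : R[i], `|la| = 1 /\
    \sum_j (hn (ufun w (E j) + la *: E j) + hn (ufun w (F j) - la *: F j)) < 1.

Lemma near_scale m (E F : 'I_m -> H) (w w' : unitary ip) (ka : R[i]) :
  `|ka| = 1 -> (forall x, ufun w' x = ka *: ufun w x) -> near E F w -> near E F w'.
Proof.
move=> nk hw [la [nl hs]]; exists (ka * la); split; first by rewrite normrM nk nl mulr1.
apply: le_lt_trans hs; rewrite le_eqVlt; apply/orP; left; apply/eqP.
apply: eq_bigr => j _; rewrite !hw -!scalerA -scalerDr -scalerBr !hnZ nk !mul1r //.
Qed.

Lemma near_pu m (E F : 'I_m -> H) (u : unitary ip) :
  near E F u <-> near E F (pu_rep (pu_of u)).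
Proof.
have [ka [nk hk]] := pu_rep_of u.
have k0 : ka != 0 by apply/eqP => k0; move: nk; rewrite k0 normr0 => /eqP; rewrite eq_sym oner_eq0.
split => h; first exact: (near_scale nk hk h).
apply: (@near_scale _ _ _ _ _ ka^-1) h; first by rewrite normfV nk invr1.
by move=> x; rewrite hk scalerA mulVf // scale1r.
Qed.

Lemma near_Qk n (E F : 'I_n.+1 -> H)
  (oE : forall i j, inn (E i) (E j) = (i == j)%:R)
  (oF : forall i j, inn (F i) (F j) = (i == j)%:R) (w : unitary ip) :
  near E F w -> Qk n w -> False.
Proof.
move=> [la [nl hs]] [ys [sz [mu [nm hw]]]].
have k1 := key oE sz hw (- la).
have k2 := key oF sz hw la.
rewrite big_split /= in hs.
have h2 : `|mu + la| + `|mu - la| < 1.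
  apply: le_lt_trans hs; apply: lerD.
    have e j : hn (ufun w (E j) - (- la) *: E j) = hn (ufun w (E j) + la *: E j).
      by rewrite scaleNr opprK.
    by move: k1; rewrite opprK (eq_bigr _ (fun j _ => e j)).
  exact: k2.
have : 2 <= `|mu + la| + `|mu - la|.
  have e2 : (mu + la) - (mu - la) = la *+ 2 by rewrite mulr2n; ring.
  have -> : 2 = `|(mu + la) - (mu - la)| by rewrite e2 normrMn nl.
  exact: ler_normB.
move=> h; have := le_lt_trans h h2; rewrite ltrn1 //.
Qed.

Lemma near_open n (E F : 'I_n.+1 -> H) : sot_open (near E F).
Proof.
move=> u [la [nl hs]].
set s := \sum_j _ in hs.
set m := n.+1.
have m0 : (0 < m)%N by [].
set eps := (1 - s) / (4 * m%:R).
have s1 : 0 < 1 - s by rewrite subr_gt0.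
have m0' : (m%:R : R[i]) != 0 by rewrite pnatr_eq0 -lt0n.
have eps0 : 0 < eps by rewrite divr_gt0 // mulr_gt0 // ltr0n // lt0n.
exists ([seq E j | j <- enum 'I_m] ++ [seq F j | j <- enum 'I_m]), eps; split => //.
move=> w hw; exists la; split => //.
have hwE j : hn (ufun w (E j) - ufun u (E j)) <= eps.
  apply: ltW; apply: hw; apply: memIn; rewrite mem_cat map_f ?mem_enum //.
have hwF j : hn (ufun w (F j) - ufun u (F j)) <= eps.
  apply: ltW; apply: hw; apply: memIn; rewrite mem_cat orbC map_f ?mem_enum //.
apply: (@le_lt_trans _ _ (\sum_(j < m) (eps + eps) + s)).
  rewrite /s -big_split /=; apply: ler_sum => j _.
  rewrite addrACA; apply: lerD.
  - have -> : ufun w (E j) + la *: E j = (ufun w (E j) - ufun u (E j)) + (ufun u (E j) + la *: E j)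
      by rewrite addrA subrK.
    by apply: le_trans (hnD _ _) _; rewrite lerD2r.
  - have -> : ufun w (F j) - la *: F j = (ufun w (F j) - ufun u (F j)) + (ufun u (F j) - la *: F j)
      by rewrite addrA subrK.
    by apply: le_trans (hnD _ _) _; rewrite lerD2r.
rewrite sumr_const card_ord -mulr_natr.
have -> : (eps + eps) * m%:R = (1 - s) / 2 by rewrite /eps; field.
rewrite -subr_gt0.
have -> : 1 - ((1 - s) / 2 + s) = (1 - s) / 2 by field.
by rewrite divr_gt0.
Qed.
End HilbertFacts.

Lemma PU_not_tbng (R : realType) (H : lmodType R[i]) (ip : inner_product H) :
  infinite_dimensional ip ->
  ~ top_bounded_normal_generation (@pu_mul R H ip) (@pu_inv R H ip) (@pu_one R H ip) (@pu_open R H ip).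
Proof.
move=> hinf T.
have [e2 he2] := hinf 2%N.
pose e0 := e2 ord0; pose e1 := e2 ord_max.
have h00 : inner ip e0 e0 = 1 by rewrite he2.
have h10 : inner ip e1 e0 = 0 by rewrite he2.
have h11 : inner ip e1 e1 = 1 by rewrite he2.
pose g := pu_of (refl h00).
have g1 : g <> pu_one ip.
  move=> eg; have ec := f_equal (@proj1_sig _ _) eg; rewrite /= in ec.
  have hr : uclass (refl h00) (refl h00).
    by exists 1; split; [rewrite normr1 | move=> x; rewrite scale1r].
  rewrite ec in hr; case: hr => la [_ hla].
  have a := hla e0; have b := hla e1.
  rewrite (refl_e h00) /= in a; rewrite (refl_orth h00 h10) /= in b.
  have a' := f_equal (fun v => inner ip v e0) a; rewrite /= innNl innZl h00 mulr1 in a'.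
  have b' := f_equal (fun v => inner ip v e1) b; rewrite /= innZl h11 mulr1 in b'.
  have c : (-1 : R[i]) = 1 by rewrite a' b'.
  have : (1 + 1 : R[i]) = 0 by rewrite -{1}c addNr.
  by move/eqP; rewrite -mulr2n pnatr_eq0.
have [n hn'] := T g g1.
have qg : QP 1 g.
  apply: QP_of; exists [:: e0]; split => //; exists 1; split; first by rewrite normr1.
  move=> x hx; rewrite scale1r; apply: (refl_orth h00); apply: hx; exact: mem_head.
have [e he] := hinf (n.+1 + n.+1)%N.
pose E j := e (lshift n.+1 j); pose F j := e (rshift n.+1 j).
have oE i j : inner ip (E i) (E j) = (i == j)%:R by rewrite he eq_lshift.
have oF i j : inner ip (F i) (F j) = (i == j)%:R by rewrite he eq_rshift.
have oFE i j : inner ip (F i) (E j) = 0 by rewrite he eq_sym eq_lrshift.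
have heE i : inner ip (E i) (E i) = 1 by rewrite oE eqxx.
have hoE i j : i != j -> inner ip (E i) (E j) = 0 by move=> /negbTE ij; rewrite oE ij.
pose z := zf heE (enum 'I_n.+1).
have nz : near E F z.
  exists 1; split; first by rewrite normr1.
  rewrite big1 ?ltr01 // => j _.
  rewrite zf_E ?enum_uniq ?mem_enum // zf_orth ?scale1r ?addNr ?subrr ?hn0 ?addr0 // => i _; exact: oFE.
pose W := fun A : PU ip => near E F (pu_rep A).
have oW : pu_open W.
  move=> u /(near_pu E F u).2 hu.
  have [xs [eps [eps0 hxs]]] := near_open hu.
  exists xs, eps; split => // w hw; apply/(near_pu E F w).1; exact: hxs.
have [y [Wy Py]] := hn' (pu_of z) W oW ((near_pu E F z).1 nz).
exact: (near_Qk oE oF Wy (QP_pow qg Py)).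
Qed.


Module SymPart.
From Stdlib Require Import List.
Local Close Scope ring_scope.
Section SymFacts.
Variable X : Type.

Definition deq (a b : X) : {a = b} + {a <> b} := excluded_middle_informative (a = b).

Definition swapf (a b x : X) : X :=
  if deq x a then b else if deq x b then a else x.

Lemma swapK a b x : swapf a b (swapf a b x) = x.
Proof.
unfold swapf; repeat match goal with |- context [deq ?u ?v] =>
  lazymatch u with context [deq _ _] => fail | _ => destruct (deq u v); cbn end end; congruence.
Qed.

Definition tr (a b : X) : perm_of X := @PermOf X (swapf a b) (swapf a b) (swapK a b) (swapK a b).

Definition Qs (k : nat) (p : perm_of X) :=
  exists xs : list X, (length xs <= k)%N /\ forall x, ~ In x xs -> pfun p x = x.

Lemma Qs_mul a b p q : Qs a p -> Qs b q -> Qs (a + b) (sym_mul p q).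
Proof.
move=> [xs [l1 h1]] [ys [l2 h2]]; exists (xs ++ ys); split.
  by rewrite length_app leq_add.
move=> x nx /=; rewrite h2 ?h1 // => h; apply: nx; apply: in_or_app; tauto.
Qed.

Lemma Qs_conj k h p : Qs k p -> Qs k (sym_mul (sym_mul h p) (sym_inv h)).
Proof.
move=> [xs [l1 h1]]; exists (map (pfun h) xs); split; first by rewrite length_map.
move=> x nx /=; rewrite h1 ?pinvK // => hin; apply: nx.
by rewrite -(pinvK h x); apply: in_map.
Qed.

Lemma Qs_inv k p : Qs k p -> Qs k (sym_inv p).
Proof.
move=> [xs [l1 h1]]; exists xs; split => // x nx /=.
by rewrite -{1}(h1 x nx) pfunK.
Qed.

Lemma Qs_pow k g n A : Qs k g ->
  set_pow (@sym_mul X) (@sym_one X) (conj_pm (@sym_mul X) (@sym_inv X) g) n A -> Qs (k * n) A.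
Proof.
move=> qg; elim: n A => [|n IH] A /=.
  by move=> ->; exists nil; split.
move=> [a [b [[h ha] [hb ->]]]].
have qa : Qs k a by case: ha => ->; [apply: Qs_conj | apply: Qs_conj; apply: Qs_inv].
by rewrite mulnS; apply: Qs_mul => //; apply: IH.
Qed.

Hypothesis Xinf : infinite_type X.

Lemma move_all (L : list X) : exists p : perm_of X, forall x, In x L -> pfun p x <> x.
Proof.
elim: L => [|a L [p hp]]; first by exists (sym_one X).
have [b hb] := Xinf (a :: nil).
have ba : b <> a by move=> e; apply: hb; left.
case: (deq (pfun p a) a) => pa; last first.
  by exists p => x [<-|xL] //; apply: hp.
exists (sym_mul (tr a b) p) => x /= hx.
rewrite /swapf.
destruct (deq (pfun p x) a) as [e|na]; cbn.
  have xa : x = a by rewrite -(pfunK p x) e -{1}pa pfunK.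
  by rewrite xa.
destruct (deq (pfun p x) b) as [e|nb]; cbn.
  move=> ax; rewrite -ax in e; congruence.
case: hx => [xa|xL]; first by subst x; congruence.
exact: hp.
Qed.

Lemma distinct_list (k : nat) : exists L : list X, NoDup L /\ length L = k.
Proof.
elim: k => [|k [L [nd hl]]]; first by exists nil; split => //; constructor.
have [x hx] := Xinf L; exists (x :: L); split; first by constructor.
by rewrite /= hl.
Qed.
End SymFacts.

Lemma Sym_not_tbng (X : Type) : infinite_type X ->
  ~ top_bounded_normal_generation (@sym_mul X) (@sym_inv X) (@sym_one X) (@sym_open X).
Proof.
move=> Xinf T.
have [a _] := Xinf nil.
have [b hb] := Xinf (a :: nil).
have ba : b <> a by move=> e; apply: hb; left.
pose g := tr a b.
have g1 : g <> sym_one X.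
  move=> eg; have := f_equal (@pfun X) eg => /= e.
  have := f_equal (fun f => f a) e; rewrite /= /swapf.
  by case: (deq a a).
have [n hn] := T g g1.
have qg : Qs 2 g.
  exists (a :: b :: nil); split => // x nx /=; rewrite /swapf.
  destruct (deq x a) as [xa|n1]; first by case: nx; left.
  destruct (deq x b) as [xb|n2] => //; by case: nx; right; left.
have [L [nd hl]] := distinct_list Xinf (2 * n).+1.
have [p hp] := move_all Xinf L.
pose W := fun h : perm_of X => forall x, In x L -> pfun h x <> x.
have oW : sym_open W.
  move=> h hW; exists L => h' agree x xL; rewrite agree //; exact: hW.
have [y [Wy Py]] := hn p W oW hp.
have [xs [lx hx]] := Qs_pow qg Py.
have inc : incl L xs.
  move=> x xL; apply: NNPP => nx; exact: (Wy x xL (hx x nx)).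
have := NoDup_incl_length nd inc; rewrite hl => /ssrnat.leP.
by move=> h; have := leq_trans h lx; rewrite ltnn.
Qed.

End SymPart.

Theorem mainTheorem7 :
  (forall X : Type, infinite_type X ->
     ~ top_bounded_normal_generation (@sym_mul X) (@sym_inv X) (@sym_one X)
         (@sym_open X)) /\
  (forall (R : realType) (H : lmodType R[i]) (ip : inner_product H),
     hilbert_complete ip -> infinite_dimensional ip ->
     ~ top_bounded_normal_generation (@pu_mul R H ip) (@pu_inv R H ip)
         (@pu_one R H ip) (@pu_open R H ip)).
Proof.
split.
- exact: SymPart.Sym_not_tbng.
- by move=> R H ip _; apply: PU_not_tbng.
Qed.
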